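(* Let $G$ be a finite loopless multigraph and let $p$ be a positive integer. Then $$({\rm Arb}_p(G))^p\ \ge\ \max\{{\rm Arb}(H): H \text{ a loopless multigraph such that } G \text{ contains a } \le(p-1)\text{-subdivision of } H \text{ as a subgraph}\}\ \ge\ \widetilde\nabla^{\rm m}_{(p-1)/2}(G).$$
   Context: All multigraphs are finite and loopless; a cycle of length $2$ is formed by two parallel edges, and $|C|$ denotes the number of edges of a cycle $C$. ${\rm Arb}(H)$ is the minimum number of forests into which the edge set of $H$ can be partitioned. ${\rm Arb}_p(G)$ is the minimum number of colours in an edge colouring of $G$ such that every cycle $C$ of $G$ receives at least $\min(|C|,p+1)$ distinct colours. For a non-negative integer $k$, a $\le k$-subdivision of a multigraph $H$ is obtained by replacing each edge of $H$ (each parallel copy separately) by a path with at most $k$ internal vertices, the paths being internally vertex-disjoint and avoiding the vertices of $H$. For a half-integer $r\ge 0$, $\widetilde\nabla^{\rm m}_r(G)$ is the maximum of $\|H\|/|H|$ over all loopless multigraphs $H$ (with $|H|\ge 1$) such that some $\le 2r$-subdivision of $H$ is a subgraph of $G$, where $\|H\|$ counts edges with multiplicity. *)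

(* Defs.v *)
From HB Require Import structures.
From mathcomp Require Import all_boot all_order all_algebra.
Set Implicit Arguments. Unset Strict Implicit. Unset Printing Implicit Defensive.
Import Order.TTheory GRing.Theory Num.Theory.

(* A finite multigraph: finite vertex type, finite edge type (each element is
   one parallel copy), and an endpoint map. *)
Record mgraph := MGraph {
  mV : finType;
  mE : finType;
  mends : mE -> mV * mV
}.

Definition loopless (G : mgraph) : Prop :=
  forall e : mE G, (mends e).1 <> (mends e).2.

Definition joins (G : mgraph) (e : mE G) (x y : mV G) : Prop :=
  mends e = (x, y) \/ mends e = (y, x).

(* A cycle of length k >= 2: distinct vertices vs 0..k-1, distinct edges
   es 0..k-1, edge es i joining vs i and vs (i+1 mod k). For k = 2 this is a
   pair of parallel edges. *)
Definition cycle_in (G : mgraph) (k : nat) (vs : 'I_k -> mV G) (es : 'I_k -> mE G)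
  : Prop :=
  2 <= k /\ injective vs /\ injective es /\
  forall i : 'I_k, joins (es i) (vs i) (vs (ordS i)).

Definition p_colouring (G : mgraph) (p c : nat) (col : mE G -> 'I_c) : Prop :=
  forall k (vs : 'I_k -> mV G) (es : 'I_k -> mE G), cycle_in vs es ->
    minn k p.+1 <= #|[set col (es i) | i : 'I_k]|.

Definition is_Arbp (G : mgraph) (p c : nat) : Prop :=
  (exists col : mE G -> 'I_c, p_colouring p col) /\
  forall c' (col' : mE G -> 'I_c'), p_colouring p col' -> c <= c'.

Definition forest_colouring (H : mgraph) (a : nat) (col : mE H -> 'I_a) : Prop :=
  forall k (vs : 'I_k -> mV H) (es : 'I_k -> mE H) (x : 'I_a),
    cycle_in vs es -> ~ (forall i, col (es i) = x).

Definition is_Arb (H : mgraph) (a : nat) : Prop :=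
  (exists col : mE H -> 'I_a, forest_colouring col) /\
  forall a' (col' : mE H -> 'I_a'), forest_colouring col' -> a <= a'.

(* G contains a <= t-subdivision of H as a subgraph: branch vertices phi
   (injective); each edge e of H (with ends (u,v)) becomes a path of l e edges
   (1 <= l e <= t+1, i.e. at most t internal vertices), with vertices
   w e 0 = phi u, ..., w e (l e) = phi v and edges f e i joining w e i and
   w e (i+1).  The whole subdivided graph maps injectively into G: paths are
   vertex-injective, internal vertices avoid phi's image and are distinct
   across paths, and all edges used are distinct. *)
Definition subdiv_in (G : mgraph) (t : nat) (H : mgraph) : Prop :=
  exists (phi : mV H -> mV G) (l : mE H -> nat)
         (w : forall e : mE H, 'I_(l e).+1 -> mV G)
         (f : forall e : mE H, 'I_(l e) -> mE G),
    injective phi /\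
    (forall e, 1 <= l e <= t.+1) /\
    (forall e, w e ord0 = phi (mends e).1) /\
    (forall e, w e ord_max = phi (mends e).2) /\
    (forall e (i : 'I_(l e)),
        joins (f e i) (w e (widen_ord (leqnSn _) i)) (w e (lift ord0 i))) /\
    (forall e, injective (w e)) /\
    (forall e (j : 'I_(l e).+1) x, 0 < j < l e -> w e j <> phi x) /\
    (forall e e' (j : 'I_(l e).+1) (j' : 'I_(l e').+1),
        0 < j < l e -> 0 < j' < l e' -> w e j = w e' j' -> e = e') /\
    (forall e e' (i : 'I_(l e)) (i' : 'I_(l e')),
        f e i = f e' i' -> e = e' /\ (i : nat) = i').

Definition is_max_Arb (G : mgraph) (t M : nat) : Prop :=
  (exists H, loopless H /\ subdiv_in G t H /\ is_Arb H M) /\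
  forall H a, loopless H -> subdiv_in G t H -> is_Arb H a -> a <= M.

(* q = \widetilde\nabla^m_r(G) with t = 2r (so r = t/2 is a half-integer). *)
Definition is_nabla_m (G : mgraph) (t : nat) (q : rat) : Prop :=
  (exists H, loopless H /\ subdiv_in G t H /\ 0 < #|mV H| /\
     q = (#|mE H|%:R / #|mV H|%:R)%R) /\
  forall H, loopless H -> subdiv_in G t H -> 0 < #|mV H| ->
     (#|mE H|%:R / #|mV H|%:R <= q)%R.

(* Main.v *)
Require Import Defs.
From HB Require Import structures.
From mathcomp Require Import all_boot all_order all_algebra.
From mathcomp Require Import zify.
From Stdlib Require Import Classical.
Import Order.TTheory GRing.Theory Num.Theory.
Set Implicit Arguments. Unset Strict Implicit. Unset Printing Implicit Defensive.

Lemma ex_max_bounded (P : nat -> Prop) B n0 : P n0 -> (forall n, P n -> n <= B) ->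
  exists m, P m /\ forall n, P n -> n <= m.
Proof.
move=> Pn0; elim: B => [|B IH] hB.
  by exists n0; split=> // n /hB; have := hB _ Pn0; lia.
case: (classic (P B.+1)) => [PB|nPB]; first by exists B.+1; split.
apply: IH => n Pn; have := hB _ Pn; rewrite leq_eqVlt => /orP[/eqP E|]; first by subst.
by rewrite ltnS.
Qed.

Lemma ex_min (P : nat -> Prop) N : P N -> exists m, P m /\ forall n, P n -> m <= n.
Proof.
have: forall n, n <= N -> P n -> exists m, P m /\ forall n, P n -> m <= n.
  elim: N => [|N IH] n hn Pn.
    by exists n; split=> // k _; move: hn; rewrite leqn0 => /eqP->.
  case: (classic (exists k, k < n /\ P k)) => [[k [hk Pk]]|nk].
    apply: (IH k) => //; lia.
  exists n; split=> // k Pk; case: (leqP n k) => // hk; exfalso; apply: nk; by exists k.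
by move=> /(_ N (leqnn N)).
Qed.

Lemma ordS_val k (i : 'I_k) : (ordS i : nat) = if i.+1 < k then i.+1 else 0.
Proof.
rewrite /ordS /=; case: ifP => h; first by rewrite modn_small.
have -> : i.+1 = k by have := ltn_ord i; move: h; lia.
by rewrite modnn.
Qed.

Lemma ord_pred_neq k (i : 'I_k) : 2 <= k -> ord_pred i != i.
Proof.
move=> hk; apply/eqP => E.
have : ordS i = i by rewrite -{1}E ord_predK.
move/(f_equal (@nat_of_ord k)); rewrite ordS_val; case: ifP => h; first lia.
have := ltn_ord i; move: h; lia.
Qed.

Section Gen.
Variable G : mgraph.
Notation V := (mV G).
Notation E := (mE G).

Definition inc (e : E) (x : V) := ((mends e).1 == x) || ((mends e).2 == x).
Definition oth (e : E) (x : V) := if (mends e).1 == x then (mends e).2 else (mends e).1.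

Lemma inc_joins e x : inc e x -> joins e x (oth e x).
Proof.
rewrite /inc /oth /joins; case: (mends e) => a b /=.
case: eqP => [->|_] /=; first by left.
by move=> /eqP->; right.
Qed.

Lemma joins_inc e x y : joins e x y -> [/\ inc e x, inc e y & oth e x = y].
Proof.
rewrite /inc /oth /joins; case: (mends e) => a b /= [[-> ->]|[-> ->]];
  rewrite !eqxx ?orbT //=; split=> //; case: eqP => //.
Qed.

Lemma oth_ends e x : inc e x -> oth e x = (mends e).1 \/ oth e x = (mends e).2.
Proof. rewrite /oth; case: ifP; auto. Qed.

Lemma inc_ends e x : inc e x -> x = (mends e).1 \/ x = (mends e).2.
Proof. by rewrite /inc => /orP[/eqP->|/eqP->]; auto. Qed.

Lemma joins_eq (e : E) (x y x' y' : V) : joins e x y -> joins e x' y' ->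
  (x = x' /\ y = y') \/ (x = y' /\ y = x').
Proof.
rewrite /joins => -[E1|E1] [E2|E2]; rewrite E1 in E2; case: E2 => -> ->; auto.
Qed.

Lemma cyc_two k (vs : 'I_k -> V) (es : 'I_k -> E) (m : 'I_k) :
  cycle_in vs es -> exists i1 i2, [/\ es i1 != es i2, inc (es i1) (vs m) & inc (es i2) (vs m)].
Proof.
move=> [hk [_ [esi hj]]]; exists m, (ord_pred m); split.
- by apply/eqP => /esi /eqP; rewrite eq_sym (negbTE (ord_pred_neq m hk)).
- by have [] := joins_inc (hj m).
- by have [_ +] := joins_inc (hj (ord_pred m)); rewrite ord_predK.
Qed.

Lemma cyc_end k (vs : 'I_k -> V) (es : 'I_k -> E) (i : 'I_k) x :
  cycle_in vs es -> inc (es i) x -> exists m, vs m = x.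
Proof.
move=> [_ [_ [_ hj]]] hx; have := hj i.
rewrite /joins; have := inc_ends hx => -[->|->] [->|->] /=; eauto.
Qed.

Definition npath (S : {set V}) (F : {set E}) m (vs : nat -> V) (es : nat -> E) :=
  [/\ (forall i j, i <= m -> j <= m -> vs i = vs j -> i = j),
      (forall i, i <= m -> vs i \in S) &
      (forall i, i < m -> es i \in F /\ joins (es i) (vs i) (vs i.+1))].

Lemma npath_es_inj S F m vs es i j : npath S F m vs es -> i < m -> j < m ->
  es i = es j -> i = j.
Proof.
move=> [vi _ he] hi hj E1.
have [_ J1] := he i hi; have [_ J2] := he j hj; rewrite E1 in J1.
case: (joins_eq J1 J2) => [[A _]|[A B]]; first by apply: vi A => //; lia.
have := vi _ _ _ _ A; have := vi _ _ _ _ B; lia.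
Qed.

Ltac alia := repeat match goal with
  | H : is_true (leq _ _) |- _ => revert H
  | H : (leq _ _) = _ |- _ => revert H
  | H : @eq nat _ _ |- _ => revert H
  end; repeat match goal with H : _ |- _ => clear H end; intros; lia.

Lemma lemmaA (S : {set V}) (F : {set E}) x0 :
  (forall e, e \in F -> (mends e).1 != (mends e).2) -> x0 \in S ->
  (forall x, x \in S -> exists e1 e2, [/\ e1 != e2, e1 \in F, e2 \in F, inc e1 x & inc e2 x]
        /\ oth e1 x \in S /\ oth e2 x \in S) ->
  exists k (vs : 'I_k -> V) (es : 'I_k -> E), cycle_in vs es /\ forall i, es i \in F.
Proof.
move=> HF x0S HD.
have [e00 [_ _]] := HD x0 x0S.
have P0 : exists vs es, npath S F 0 vs es.
  exists (fun _ => x0), (fun _ => e00); split=> //; alia.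
have Pb : forall n, (exists vs es, npath S F n vs es) -> n <= #|V|.
  move=> n [vs [es [vi _ _]]].
  have inj : injective (fun i : 'I_n.+1 => vs i).
    move=> i j /vi; move=> /(_ (ltn_ord i) (ltn_ord j)) h; exact: val_inj.
  have := max_card [set vs i | i : 'I_n.+1]; rewrite card_imset // card_ord; alia.
have [m [[vs [es Pm]] mmax]] := ex_max_bounded P0 Pb.
case: Pm => vi vS he.
have [e1 [e2 [[ne e1F e2F i1 i2] [o1 o2]]]] := HD _ (vS m (leqnn m)).
set v := vs m.
have [e [eF ev eS ene]] : exists e, [/\ e \in F, inc e v, oth e v \in S &
    (0 < m -> e != es m.-1)].
  case: (eqVneq e1 (es m.-1)) => [E1|N1]; last by exists e1.
  by exists e2; split=> // _; rewrite -E1 eq_sym.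
set u := oth e v.
have J := inc_joins ev; rewrite -/u in J.
have uv : u <> v.
  move=> uv; have := HF _ eF; move: J; rewrite /joins uv => -[]->; rewrite eqxx.
  by []. by [].
case: (classic (exists a, a <= m /\ vs a = u)) => [[a [ha hu]]|nu]; last first.
  have : exists vs' es', npath S F m.+1 vs' es'.
    exists (fun j => if j <= m then vs j else u), (fun j => if j < m then es j else e).
    split.
    - move=> i j hi hj; case: ifP => hi'; case: ifP => hj'.
      + by apply: vi.
      + move=> h; exfalso; apply: nu; exists i; split=> //.
      + move=> h; exfalso; apply: nu; exists j; split=> //.
      + move=> _; clear -hi hj hi' hj'; alia.
    - by move=> i hi; case: ifP => h; [apply: vS|].
    - move=> i hi; case: ifP => hi'.
        have -> : i <= m by alia.
        exact: he.
      have im : i = m by alia.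
      subst i; rewrite leqnn; split=> //.
  by move/mmax; alia.
have am : a < m by rewrite ltn_neqAle ha andbT; apply/eqP => am; apply: uv; rewrite -hu am.
pose vsC := fun i : 'I_(m - a).+1 => vs (a + i).
pose esC := fun i : 'I_(m - a).+1 => if (i : nat) < m - a then es (a + i) else e.
exists (m - a).+1, vsC, esC; split; last first.
  by move=> i; rewrite /esC; case: ifP => h //; have [] := he (a + i) ltac:(alia).
split; first by alia.
split.
  move=> i j; rewrite /vsC => /vi h; apply: ord_inj; have := ltn_ord i; have := ltn_ord j.
  move=> hi hj; have := h ltac:(alia) ltac:(alia); alia.
split.
  move=> i j; rewrite /esC; have := ltn_ord i; have := ltn_ord j; move=> hj hi.
  case: ifP => hi'; case: ifP => hj'.
  - move=> /npath_es_inj h; apply: ord_inj; have := h S F m vs; rewrite /npath.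
    move=> /(_ (And3 vi vS he)) h2; have := h2 ltac:(alia) ltac:(alia); alia.
  - move=> E2; exfalso.
    have [_ J1] := he (a + i) ltac:(alia); rewrite E2 in J1.
    case: (joins_eq J1 J) => [[A _]|[A B]].
      have := vi (a + i) m ltac:(alia) (leqnn m) A; alia.
    rewrite -hu in A; have := vi (a + i) a ltac:(alia) ha A => ai.
    have i0 : (i : nat) = 0 by alia.
    rewrite i0 addn0 in B; rewrite -/v in B.
    have := vi a.+1 m ltac:(alia) (leqnn m) B => am1.
    have := ene ltac:(alia); rewrite -E2 i0 addn0.
    by rewrite -am1 /= eqxx.
  - move=> E2; exfalso.
    have [_ J1] := he (a + j) ltac:(alia); rewrite -E2 in J1.
    case: (joins_eq J1 J) => [[A _]|[A B]].
      have := vi (a + j) m ltac:(alia) (leqnn m) A; alia.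
    rewrite -hu in A; have := vi (a + j) a ltac:(alia) ha A => ai.
    have i0 : (j : nat) = 0 by alia.
    rewrite i0 addn0 in B; rewrite -/v in B.
    have := vi a.+1 m ltac:(alia) (leqnn m) B => am1.
    have := ene ltac:(alia); rewrite E2 i0 addn0.
    by rewrite -am1 /= eqxx.
  - move=> _; apply: ord_inj; alia.
move=> i; rewrite /vsC /esC ordS_val; have := ltn_ord i; move=> hi.
case: ifP => h.
  have -> : (i : nat).+1 < (m - a).+1 by alia.
  have [_ J1] := he (a + i) ltac:(alia); by rewrite addnS.
have -> : ((i : nat).+1 < (m - a).+1) = false by alia.
have -> : a + i = m by alia.
by rewrite addn0 hu.
Qed.

Definition FS (F : {set E}) (S : {set V}) :=
  [set e in F | ((mends e).1 \in S) && ((mends e).2 \in S)].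

Lemma oth_in F S e x : e \in FS F S -> inc e x -> oth e x \in S.
Proof.
rewrite inE => /and3P[_ h1 h2] /oth_ends [->|->] //.
Qed.

Lemma FS_set0 F : FS F set0 = set0.
Proof. by apply/setP => e; rewrite /FS !inE /= andbF. Qed.

Lemma lemmaB (F : {set E}) :
  (forall e, e \in F -> (mends e).1 != (mends e).2) ->
  (forall k (vs : 'I_k -> V) (es : 'I_k -> E), cycle_in vs es -> ~ (forall i, es i \in F)) ->
  #|F| <= #|V|.
Proof.
move=> HF acyc.
suff: forall n (S : {set V}), #|S| <= n -> #|FS F S| <= #|S|.
  move=> /(_ #|V| setT); rewrite cardsT => /(_ (leqnn _)).
  congr (_ <= _); apply: eq_card => e; rewrite /FS !inE /= andbT //.
elim=> [|n IH] S hS.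
  move: hS; rewrite leqn0 => /eqP/cards0_eq ->; by rewrite FS_set0 !cards0.
case: (classic (forall x, x \in S -> exists e1 e2,
   [/\ e1 != e2, e1 \in FS F S, e2 \in FS F S, inc e1 x & inc e2 x])) => [H2|N2].
  case: (set_0Vmem S) => [->|[x0 x0S]]; first by rewrite FS_set0 !cards0.
  exfalso.
  have HF' : forall e, e \in FS F S -> (mends e).1 != (mends e).2.
    by move=> e; rewrite inE => /andP[/HF].
  have [k [vs [es [cy hin]]]] := lemmaA HF' x0S (fun x xS =>
     match H2 x xS with ex_intro e1 (ex_intro e2 (And5 a b c d f)) =>
       ex_intro _ e1 (ex_intro _ e2 (conj (And5 a b c d f)
          (conj (oth_in b d) (oth_in c f)))) end).
  apply: (acyc k vs es cy) => i; have := hin i; rewrite inE => /andP[].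
  done.
have [x [xS hx]] : exists x, x \in S /\ forall e1 e2, e1 \in FS F S -> e2 \in FS F S ->
    inc e1 x -> inc e2 x -> e1 = e2.
  apply: NNPP => nx; apply: N2 => x xS; apply: NNPP => ne; apply: nx; exists x; split=> //.
  move=> e1 e2 h1 h2 i1 i2; apply: NNPP => n12; apply: ne; exists e1, e2; split=> //.
  by apply/eqP.
set D := [set e in FS F S | inc e x].
have hD : #|D| <= 1.
  apply/card_le1_eqP => e1 e2; rewrite /D !in_set => /andP[h1 i1] /andP[h2 i2].
  by symmetry; apply: hx => //; rewrite /FS inE.
have sub : FS F S \subset FS F (S :\ x) :|: D.
  apply/subsetP => e he; rewrite inE; case ix: (inc e x).
    by rewrite [e \in D]inE he ix orbT.
  move: he ix; rewrite /inc !inE => /and3P[-> -> ->].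
  by move=> /norP[-> ->].
have cS := cardsD1 x S; rewrite xS in cS.
have := IH (S :\ x) ltac:(move: hS; rewrite cS; lia).
have := subset_leq_card sub; have := leq_card_setU (FS F (S :\ x)) D.
move=> /leqifP; case: ifP => _ h1; move: hD; rewrite cS; lia.
Qed.

End Gen.

Lemma forest_count (H : mgraph) a (col : mE H -> 'I_a) :
  loopless H -> forest_colouring col -> #|mE H| <= a * #|mV H|.
Proof.
move=> lH fc.
have -> : #|mE H| = \sum_(x : 'I_a) #|[set e | col e == x]|.
  rewrite -sum1_card (partition_big col xpredT) //=.
  apply: eq_bigr => x _; rewrite -sum1_card; apply: eq_bigl => e; by rewrite inE.
rewrite -[a in a * _]card_ord -sum_nat_const; apply: leq_sum => x _.
apply: lemmaB.
  by move=> e _; apply/eqP; apply: lH.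
move=> k vs es cy hall; apply: (fc k vs es x cy) => i.
by have := hall i; rewrite inE => /eqP.
Qed.

Lemma joins_sym (G : mgraph) (g : mE G) x y : joins g x y -> joins g y x.
Proof. by rewrite /joins => -[]; auto. Qed.

Lemma joins_inc_eq (G : mgraph) (g : mE G) x y z : joins g x y -> inc g z -> z = x \/ z = y.
Proof.
move=> J /inc_ends; rewrite /joins in J.
by case: J => -> /= [->|->]; auto.
Qed.

Section Sub.
Variables (G H : mgraph) (t : nat) (phi : mV H -> mV G) (l : mE H -> nat)
  (w : forall e : mE H, 'I_(l e).+1 -> mV G) (f : forall e : mE H, 'I_(l e) -> mE G).
Arguments w : clear implicits.
Arguments f : clear implicits.
Hypotheses (H1 : injective phi)
  (H2 : forall e, 1 <= l e <= t.+1)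
  (H3 : forall e, w e ord0 = phi (mends e).1)
  (H4 : forall e, w e ord_max = phi (mends e).2)
  (H5 : forall e (i : 'I_(l e)),
        joins (f e i) (w e (widen_ord (leqnSn _) i)) (w e (lift ord0 i)))
  (H6 : forall e, injective (w e))
  (H7 : forall e (j : 'I_(l e).+1) x, 0 < j < l e -> w e j <> phi x)
  (H8 : forall e e' (j : 'I_(l e).+1) (j' : 'I_(l e').+1),
        0 < j < l e -> 0 < j' < l e' -> w e j = w e' j' -> e = e')
  (H9 : forall e e' (i : 'I_(l e)) (i' : 'I_(l e')),
        f e i = f e' i' -> e = e' /\ (i : nat) = i').

Lemma clamp_lt e j : minn j (l e).-1 < l e.
Proof. have := H2 e; lia. Qed.

Definition wn e (j : nat) := w e (inord j).
Definition fn e (j : nat) := f e (Ordinal (clamp_lt e j)).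

Lemma wn_eq e (j : 'I_(l e).+1) : wn e j = w e j.
Proof. by rewrite /wn inord_val. Qed.

Lemma fn_eq e (i : 'I_(l e)) : fn e i = f e i.
Proof.
rewrite /fn; congr (f e _); apply: ord_inj => /=; have := ltn_ord i; lia.
Qed.

Lemma fn_clamp e j : fn e j = fn e (minn j (l e).-1).
Proof. rewrite /fn; congr (f e _); apply: ord_inj => /=; lia. Qed.

Lemma F1 e j : j < l e -> joins (fn e j) (wn e j) (wn e j.+1).
Proof.
move=> hj; have := H5 (Ordinal hj); rewrite -(fn_eq (Ordinal hj)).
rewrite -(wn_eq (widen_ord _ _)) -(wn_eq (lift _ _)) /=.
by rewrite /bump leq0n.
Qed.

Lemma F2a e : wn e 0 = phi (mends e).1.
Proof. by rewrite -H3 -(wn_eq ord0). Qed.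

Lemma F2b e : wn e (l e) = phi (mends e).2.
Proof. by rewrite -H4 -(wn_eq ord_max). Qed.

Lemma F3 e i j : i <= l e -> j <= l e -> wn e i = wn e j -> i = j.
Proof.
move=> hi hj /H6 /(congr1 val) /=; rewrite !inordK //.
Qed.

Lemma F4 e j x : 0 < j < l e -> wn e j <> phi x.
Proof.
move=> hj; apply: H7; rewrite inordK //; lia.
Qed.

Lemma F5 e e' j j' : 0 < j < l e -> 0 < j' < l e' -> wn e j = wn e' j' -> e = e'.
Proof.
move=> hj hj'; apply: H8; rewrite inordK //; lia.
Qed.

Lemma F6 e e' i i' : i < l e -> i' < l e' -> fn e i = fn e' i' -> e = e' /\ i = i'.
Proof.
move=> hi hi' /H9 [E1 E2]; subst e'; split=> //; move: E2 => /=; lia.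
Qed.

Lemma internal_inc e j e' i' : 0 < j < l e -> i' < l e' -> inc (fn e' i') (wn e j) ->
  e' = e /\ (i' = j \/ i'.+1 = j).
Proof.
move=> hj hi' hinc.
have [r [hr [Er hr']]] : exists r, [/\ r <= l e', wn e j = wn e' r & (r = i' \/ r = i'.+1)].
  case: (joins_inc_eq (F1 hi') hinc) => ->; [exists i' | exists i'.+1]; split=> //; lia.
case: (posnP r) => r0.
  by exfalso; apply: (F4 hj); rewrite Er r0 F2a.
case: (ltngtP r (l e')) => rl; last first.
  by exfalso; apply: (F4 hj); rewrite Er rl F2b.
  lia.
have ee : e = e' by apply: (F5 hj _ Er); lia.
subst e'; split=> //; have := F3 _ _ Er; lia.
Qed.

Lemma endpoint_edge e z : z = (mends e).1 \/ z = (mends e).2 ->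
  exists i, [/\ i < l e, inc (fn e i) (phi z) & exists j, j <= l e /\ oth (fn e i) (phi z) = wn e j].
Proof.
have := H2 e => hl.
case=> ->.
  exists 0; split; first lia.
  - by have [] := joins_inc (F1 (e:=e) (j:=0) ltac:(lia)); rewrite F2a.
  - exists 1; split; first lia.
    by have [] := joins_inc (F1 (e:=e) (j:=0) ltac:(lia)); rewrite F2a.
exists (l e).-1; split; first lia.
- have := joins_inc (joins_sym (F1 (e:=e) (j:=(l e).-1) ltac:(lia))).
  have -> : (l e).-1.+1 = l e by lia.
  by rewrite F2b => -[].
- exists (l e).-1; split; first lia.
  have := joins_inc (joins_sym (F1 (e:=e) (j:=(l e).-1) ltac:(lia))).
  have -> : (l e).-1.+1 = l e by lia.
  by rewrite F2b => -[].
Qed.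


Definition code p c (col : mE G -> 'I_c) e : {ffun 'I_p -> 'I_c} :=
  [ffun j : 'I_p => col (fn e j)].

Lemma sub_forest p c (col : mE G -> 'I_c) :
  loopless G -> p_colouring p col -> t.+1 <= p ->
  forest_colouring (fun e => enum_rank (code p col e)).
Proof.
move=> lG pc tp k vsH esH x cy hall.
have [hk [vi [ei hj]]] := cy.
pose i0 : 'I_k := Ordinal (leq_trans (isT : 0 < 2) hk).
have hcode : forall i, code p col (esH i) = code p col (esH i0).
  by move=> i; apply: enum_rank_inj; rewrite hall hall.
pose S := [set y | [exists i : 'I_k, exists j : 'I_(l (esH i)).+1, y == wn (esH i) j]].
pose U := [set g | [exists i : 'I_k, exists j : 'I_(l (esH i)), g == fn (esH i) j]].
have inS : forall i j, j <= l (esH i) -> wn (esH i) j \in S.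
  move=> i j hj'; have hj2 : j < (l (esH i)).+1 by rewrite ltnS.
  rewrite inE; apply/existsP; exists i; apply/existsP; exists (Ordinal hj2); by [].
have inU : forall i j, j < l (esH i) -> fn (esH i) j \in U.
  move=> i j hj'; rewrite inE; apply/existsP; exists i; apply/existsP; exists (Ordinal hj'); by [].
have U_elim : forall g, g \in U -> exists i j, j < l (esH i) /\ g = fn (esH i) j.
  move=> g; rewrite inE => /existsP [i /existsP [j /eqP ->]]; exists i, j; split=> //.
have S_elim : forall y, y \in S -> exists i j, j <= l (esH i) /\ y = wn (esH i) j.
  move=> y; rewrite inE => /existsP [i /existsP [j /eqP ->]]; exists i, j; split=> //.
  by rewrite -ltnS.
pose Deg y := exists e1 e2, [/\ e1 != e2, e1 \in U, e2 \in U, inc e1 y & inc e2 y]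
    /\ oth e1 y \in S /\ oth e2 y \in S.
have branch : forall m : 'I_k, Deg (phi (vsH m)).
  move=> m.
  have [i1 [hi1 inc1 [j1 [hj1 o1]]]] := endpoint_edge (e := esH m) (z := vsH m)
    ltac:(by move: (hj m); rewrite /joins => -[]->; auto).
  have [i2 [hi2 inc2 [j2 [hj2 o2]]]] := endpoint_edge (e := esH (ord_pred m)) (z := vsH m)
    ltac:(by move: (hj (ord_pred m)); rewrite ord_predK /joins => -[]->; auto).
  exists (fn (esH m) i1), (fn (esH (ord_pred m)) i2); split; last by rewrite o1 o2 !inS.
  split; [|exact: inU|exact: inU|done|done].
  apply/eqP => /(F6 hi1 hi2) [/ei E1 _].
  by have := ord_pred_neq m hk; rewrite -E1 eqxx.
have HD : forall y, y \in S -> Deg y.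
  move=> y /S_elim [i [j [hjl ->]]].
  case: (posnP j) => j0.
    rewrite j0 F2a; move: (hj i); rewrite /joins => -[]->/=; first exact: branch.
    exact: branch.
  case: (ltngtP j (l (esH i))) => jl; last 1 first.
    rewrite jl F2b; move: (hj i); rewrite /joins => -[]->/=; first exact: branch.
    exact: branch.
    2: lia.
  have J1 := F1 (e := esH i) (j := j.-1) ltac:(lia).
  have J2 := F1 (e := esH i) (j := j) jl.
  have -> : j = j.-1.+1 by lia.
  rewrite -(prednK j0) in J2.
  exists (fn (esH i) j.-1), (fn (esH i) j.-1.+1).
  have [a1 _ _] := joins_inc (joins_sym J1).
  have [_ _ o1] := joins_inc (joins_sym J1).
  have [a2 _ o2] := joins_inc J2.
  split; last by rewrite o1 o2 !inS //; lia.
  split=> //; [| apply: inU; lia | apply: inU; lia].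
  apply/eqP => /F6 h; have := h ltac:(lia) ltac:(lia); lia.
have x0S : wn (esH i0) 0 \in S by apply: inS.
have HF : forall g, g \in U -> (mends g).1 != (mends g).2 by move=> g _; apply/eqP; apply: lG.
have [L [vsC [esC [cyC hinC]]]] := lemmaA HF x0S HD.
have [hL [viC [eiC hjC]]] := cyC.
pose r0 : 'I_L := Ordinal (leq_trans (isT : 0 < 2) hL).
have [ie [j0 [hj0 Er0]]] := U_elim _ (hinC r0).
set e := esH ie in hj0 Er0.
pose C g := exists r, esC r = g.
have cl : forall j r, j.+1 < l e -> inc (esC r) (wn e j.+1) ->
    esC r = fn e j \/ esC r = fn e j.+1.
  move=> j r hjl hinc.
  have [a [b [hb Eb]]] := U_elim _ (hinC r).
  rewrite Eb in hinc *.
  have [Ea hb'] := internal_inc (e := e) (j := j.+1) ltac:(lia) hb hinc.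
  rewrite Ea; case: hb' => hh; [right|left]; congr fn; lia.
have ib : forall j, j.+1 < l e -> (exists m, vsC m = wn e j.+1) -> C (fn e j) /\ C (fn e j.+1).
  move=> j hjl [m hm].
  have [r1 [r2 [ne12 ir1 ir2]]] := cyc_two m cyC.
  rewrite hm in ir1 ir2.
  case: (cl _ _ hjl ir1) => E1; case: (cl _ _ hjl ir2) => E2.
  - by exfalso; move: ne12; rewrite E1 E2 eqxx.
  - by split; [exists r1 | exists r2].
  - by split; [exists r2 | exists r1].
  - by exfalso; move: ne12; rewrite E1 E2 eqxx.
have down : forall d, d <= j0 -> C (fn e (j0 - d)).
  elim=> [|d IH] hd; first by exists r0; rewrite subn0.
  have [r hr] := IH ltac:(lia).
  have [J _] := joins_inc (F1 (e := e) (j := j0 - d) ltac:(lia)).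
  rewrite -hr in J.
  have hv := cyc_end cyC J.
  have E : j0 - d = (j0 - d.+1).+1 by lia.
  rewrite E in hv; have [] := ib (j0 - d.+1) ltac:(lia) hv; done.
have all_in : forall j, j < l e -> C (fn e j).
  elim=> [|j IH] hj'; first by have := down j0 (leqnn _); rewrite subnn.
  have [r hr] := IH ltac:(lia).
  have [_ J _] := joins_inc (F1 (e := e) (j := j) ltac:(lia)).
  rewrite -hr in J.
  by have [] := ib j hj' (cyc_end cyC J).
pose PE := [set fn e j | j : 'I_(l e)].
pose IC := [set esC r | r : 'I_L].
have cPE : #|PE| = l e.
  rewrite card_imset ?card_ord // => a b /F6 h.
  by apply: ord_inj; have [] := h (ltn_ord a) (ltn_ord b).
have cIC : #|IC| = L by rewrite card_imset ?card_ord.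
have lt : l e < L.
  rewrite -cPE -cIC; apply: proper_card; apply/properP; split.
    apply/subsetP => g /imsetP [j _ ->]; have [r <-] := all_in j (ltn_ord j).
    exact: imset_f.
  have [r hr] := all_in 0 ltac:(have := H2 e; lia).
  have [J _] := joins_inc (F1 (e := e) (j := 0) ltac:(have := H2 e; lia)).
  rewrite -hr in J; have [m hm] := cyc_end cyC J.
  have [r1 [r2 [ne12 ir1 ir2]]] := cyc_two m cyC.
  rewrite hm in ir1 ir2.
  have inPE : forall r', inc (esC r') (wn e 0) -> esC r' \in PE -> esC r' = fn e 0.
    move=> r' hi /imsetP [a _ Ea]; rewrite Ea in hi *.
    case: (joins_inc_eq (F1 (ltn_ord a)) hi) => /F3 h.
      by rewrite (h ltac:(lia) ltac:(have := ltn_ord a; lia)).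
    have := h ltac:(lia) ltac:(have := ltn_ord a; lia); lia.
  case: (boolP (esC r1 \in PE)) => p1; last by exists (esC r1); rewrite ?imset_f.
  case: (boolP (esC r2 \in PE)) => p2; last by exists (esC r2); rewrite ?imset_f.
  by move: ne12; rewrite (inPE _ ir1 p1) (inPE _ ir2 p2) eqxx.
have hcol := pc L vsC esC cyC.
have sub : [set col (esC i) | i : 'I_L] \subset [set col (fn e j) | j : 'I_(l e)].
  apply/subsetP => y /imsetP [r _ ->].
  have [a [b [hb Eb]]] := U_elim _ (hinC r).
  have hbp : b < p by have := H2 (esH a); lia.
  have hc : col (fn (esH a) b) = col (fn e (minn b (l e).-1)).
    rewrite -fn_clamp.
    have := congr1 (fun F : {ffun _ -> _} => F (Ordinal hbp)) (etrans (hcode a) (esym (hcode ie))).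
    by rewrite !ffunE.
  rewrite Eb hc; apply/imsetP; exists (Ordinal (clamp_lt e b)) => //.
have := leq_trans hcol (subset_leq_card sub).
have : #|[set col (fn e j) | j : 'I_(l e)]| <= l e.
  by rewrite -[X in _ <= X](card_ord (l e)); apply: leq_imset_card.
have := H2 e; move: lt tp; clear; lia.
Qed.

End Sub.

Definition H0 : mgraph := @MGraph void void (fun v => match v with end).

Lemma H0_arb : is_Arb H0 0.
Proof.
split.
  exists (fun v : mE H0 => match v with end) => k vs es x [hk _].
  by have := es (Ordinal (leq_trans (isT : 0 < 2) hk)).
by move=> a' _ _.
Qed.

Lemma H0_sub (G : mgraph) t : subdiv_in G t H0.
Proof.
exists (fun v : mV H0 => match v with end), (fun _ => 1),
  (fun e : mE H0 => match e with end), (fun e : mE H0 => match e with end).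
do !split; try (move=> v; case: v); case: e.
Qed.

Lemma arb_exists (H : mgraph) : exists a, is_Arb H a.
Proof.
have P0 : exists col : mE H -> 'I_#|mE H|, forest_colouring col.
  exists (@enum_rank (mE H)) => k vs es x [hk [_ [ei _]]] hall.
  have h := etrans (hall (Ordinal (leq_trans (isT : 0 < 2) hk))) (esym (hall (Ordinal hk))).
  by move: h => /enum_rank_inj /ei /(congr1 val).
have [m [Pm mmin]] := ex_min (P := fun a => exists col : mE H -> 'I_a, forest_colouring col) P0.
exists m; split=> // a' col' fc; apply: mmin; by exists col'.
Qed.

Unset Implicit Arguments.
Set Strict Implicit.

Theorem mainTheorem7 (G : mgraph) (p : nat) :
  loopless G -> 0 < p ->
  forall c, is_Arbp G p c ->
  exists M, is_max_Arb G p.-1 M /\ M <= c ^ p /\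
    (forall q : rat, is_nabla_m G p.-1 q -> (q <= M%:R)%R).
Proof.
move=> lG p0 c [[col pc] _].
have tp : p.-1.+1 <= p by rewrite prednK.
have bound : forall H a, subdiv_in G p.-1 H -> is_Arb H a -> a <= c ^ p.
  move=> H a [phi [l [w [f [h1 [h2 [h3 [h4 [h5 [h6 [h7 [h8 h9]]]]]]]]]]]] [_ amin].
  have := amin _ _ (@sub_forest _ _ _ _ _ _ _ h1 h2 h3 h4 h5 h6 h7 h8 h9 _ _ _ lG pc tp).
  by rewrite card_ffun !card_ord.
pose P a := exists H, loopless H /\ subdiv_in G p.-1 H /\ is_Arb H a.
have P0 : P 0 by exists H0; split; [case | split; [apply: H0_sub | apply: H0_arb]].
have [M [PM Mmax]] := ex_max_bounded P0 (B := c ^ p)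
  (fun n => fun '(ex_intro H (conj _ (conj s a))) => bound H n s a).
exists M; split.
  split=> // H a lH sH aH; apply: Mmax; by exists H.
split.
  by case: PM => H [_ [s a]]; exact: bound H M s a.
move=> q [[H [lH [sH [vpos ->]]]] _].
have [a0 [[col0 fc0] amin]] := arb_exists H.
have a0M : a0 <= M by apply: Mmax; exists H; split=> //; split=> //; split=> //; exists col0.
have hE := forest_count lH fc0.
rewrite ler_pdivrMr ?ltr0n // -natrM ler_nat.
apply: (leq_trans hE); by rewrite leq_mul2r a0M orbT.
Qed.
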